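(* Let $G$ be a rooted graph, $(A,B)$ a separation of $G$, $\delta\in\mathbb N$, $H$ a graph in the $\delta$-folio of $G$, and $G_H$ a realization of $H$ in $G$ witnessed by $(\phi,\varphi)$. Let $Z=N_{G_H}[\phi(V(H))]$ and suppose $R(G)\cup Z\subseteq V(A)$. Let $S\subseteq V(B)\setminus V(A)$ be such that the $4\delta$-minor folio of $B\setminus S$ relative to $V(A)\cap V(B)$ is generic. Then $H$ belongs to the $\delta$-folio of $G\setminus S$.
   Context: A separation of $G$ is a pair $(A,B)$ of subgraphs with $G=A\cup B$, $E(A)\cap E(B)=\emptyset$. A rooted graph has roots $R(G)\subseteq V(G)$ with injective labels $\rho_G$. A rooted $H$ is a topological minor of rooted $G$ if there are injective $\phi:V(H)\to V(G)$ and $\varphi$ from $E(H)$ to paths of $G$ with endpoints $\phi(u),\phi(v)$ for $\{u,v\}$, pairwise internally vertex-disjoint, with no vertex of $\phi(V(H))$ internal to any path, and $\rho_G(\phi(v))=\rho_H(v)$ for $v\in R(H)$; the subgraph formed by $\phi(V(H))$ and these paths is a realization. The $\delta$-folio is the set of rooted topological minors $H$ with $|E(H)|+\mathrm{is}(H)\le\delta$ ($\mathrm{is}$ = number of isolated vertices). A rooted graph $H$ is a (rooted) minor of rooted $G$ if there is $\psi:V(H)\to2^{V(G)}$ with pairwise disjoint sets inducing connected subgraphs, an edge of $G$ between $\psi(h),\psi(h')$ for each $\{h,h'\}\in E(H)$, and for each $u\in R(H)$ the root of $G$ with label $\rho_H(u)$ lying in $\psi(u)$. $H$ has detail $\le\delta'$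 if $|E(H)|\le\delta'$ and $|V(H)\setminus R(H)|\le\delta'$. The $\delta'$-minor folio of a graph $B'$ relative to $Q\subseteq V(B')$ (i.e. with $Q$ as root set, labelled injectively) is generic if it contains every rooted graph with root set labelled by the labels of $Q$ and detail $\le\delta'$. *)

(* Defs.v *)
From mathcomp Require Import all_boot.
Set Implicit Arguments. Unset Strict Implicit. Unset Printing Implicit Defensive.

Record sgraph (T : finType) := Graph { gV : {set T}; gE : {set {set T}} }.

Definition wf_graph (T : finType) (G : sgraph T) : Prop :=
  forall e, e \in gE G -> #|e| = 2 /\ e \subset gV G.

Record rooted (T : finType) :=
  RGraph { rg : sgraph T; groots : {set T}; lab : T -> nat }.

Definition wf_rgraph (T : finType) (G : rooted T) : Prop :=
  [/\ wf_graph (rg G), groots G \subset gV (rg G) & {in groots G &, injective (lab G)}].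

Definition separation (T : finType) (G A B : sgraph T) : Prop :=
  [/\ wf_graph A, wf_graph B,
      gV G = gV A :|: gV B, gE G = gE A :|: gE B & [disjoint gE A & gE B]].

Definition gdel (T : finType) (G : sgraph T) (S : {set T}) : sgraph T :=
  Graph (gV G :\: S) [set e in gE G | [disjoint e & S]].

Definition rdel (T : finType) (G : rooted T) (S : {set T}) : rooted T :=
  RGraph (gdel (rg G) S) (groots G :\: S) (lab G).

Definition is_path (T : finType) (G : sgraph T) (p : seq T) : Prop :=
  match p with
  | [::] => False
  | x :: s => [/\ x \in gV G, uniq p & path (fun a b => [set a; b] \in gE G) x s]
  end.

Definition pfirst (T : Type) (x0 : T) (p : seq T) := head x0 p.
Definition plast (T : Type) (x0 : T) (p : seq T) :=
  match p with [::] => x0 | x :: s => last x s end.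

Definition internal (T : Type) (p : seq T) : seq T :=
  match p with [::] => [::] | x :: s => behead (belast x s) end.

Definition pedges (T : finType) (p : seq T) : {set {set T}} :=
  match p with
  | [::] => set0
  | x :: s => [set [set a.1; a.2] | a in zip (x :: s) s]
  end.

Definition isolated (T : finType) (G : sgraph T) : {set T} :=
  [set v in gV G | [forall e in gE G, v \notin e]].

(* (phi, P) witnesses that rooted H is a rooted topological minor of rooted G:
   phi maps vertices to vertices, P maps each edge {u,v} of H to a path of G
   between phi u and phi v. *)
Definition topminor_witness (TH T : finType) (H : rooted TH) (G : rooted T)
    (phi : TH -> T) (P : {set TH} -> seq T) : Prop :=
  [/\ {in gV (rg H) &, injective phi} /\
        {in gV (rg H), forall v, phi v \in gV (rg G)},
      (forall e, e \in gE (rg H) -> exists u v, [/\ e = [set u; v],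
          is_path (rg G) (P e), pfirst (phi u) (P e) = phi u &
          plast (phi u) (P e) = phi v]),
      (forall e e', e \in gE (rg H) -> e' \in gE (rg H) -> e != e' ->
          [disjoint [set x in internal (P e)] & [set x in internal (P e')]]),
      (forall e v, e \in gE (rg H) -> v \in gV (rg H) -> phi v \notin internal (P e)) &
      (forall v, v \in groots H -> phi v \in groots G /\ lab G (phi v) = lab H v)].

Definition topminor (TH T : finType) (H : rooted TH) (G : rooted T) : Prop :=
  exists phi P, @topminor_witness TH T H G phi P.

Definition in_folio (TH T : finType) (delta : nat) (H : rooted TH) (G : rooted T) : Prop :=
  #|gE (rg H)| + #|isolated (rg H)| <= delta /\ topminor H G.

Definition realization (TH T : finType) (H : rooted TH)
    (phi : TH -> T) (P : {set TH} -> seq T) : sgraph T :=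
  Graph (phi @: gV (rg H) :|: \bigcup_(e in gE (rg H)) [set x in P e])
        (\bigcup_(e in gE (rg H)) pedges (P e)).

Definition closed_nbhd (T : finType) (G : sgraph T) (X : {set T}) : {set T} :=
  X :|: [set y in gV G | [exists x in X, [set x; y] \in gE G]].

Definition connected_in (T : finType) (G : sgraph T) (X : {set T}) : Prop :=
  X != set0 /\ X \subset gV G /\
  forall x y, x \in X -> y \in X ->
    exists s, [/\ path (fun a b => [&& a \in X, b \in X & [set a; b] \in gE G]) x s
                & last x s = y].

Definition rminor (T' T : finType) (H' : rooted T') (B' : sgraph T)
    (Q : {set T}) (lam : T -> nat) : Prop :=
  exists psi : T' -> {set T},
    [/\ (forall u, u \in gV (rg H') -> connected_in B' (psi u)),
        (forall u v, u \in gV (rg H') -> v \in gV (rg H') -> u != v ->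
             [disjoint psi u & psi v]),
        (forall u v, [set u; v] \in gE (rg H') -> u != v ->
             exists x y, [/\ x \in psi u, y \in psi v & [set x; y] \in gE B']) &
        (forall u, u \in groots H' -> exists2 q, q \in Q & lam q = lab H' u /\ q \in psi u)].

Definition detail_le (T' : finType) (H' : rooted T') (d : nat) : Prop :=
  #|gE (rg H')| <= d /\ #|gV (rg H') :\: groots H'| <= d.

Definition generic_minor_folio (T : finType) (d : nat) (B' : sgraph T)
    (Q : {set T}) (lam : T -> nat) : Prop :=
  forall (T' : finType) (H' : rooted T'), wf_rgraph H' ->
    [seq lab H' u | u in groots H'] =i [seq lam q | q in Q] -> detail_le H' d -> rminor H' B' Q lam.

(* Main.v *)
Require Import Defs.
From mathcomp Require Import all_boot.
From Stdlib Require Import IndefiniteDescription.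
Set Implicit Arguments. Unset Strict Implicit. Unset Printing Implicit Defensive.

Section Seqs.
Variable T : eqType.
Implicit Types (s l : seq T) (x y z : T).

Lemma split_first (a : pred T) s : has (predC a) s ->
  exists pre c post, [/\ s = pre ++ c :: post, all a pre & ~~ a c].
Proof.
case/split_find => x p1 p2 Hx Hn; exists p1, x, p2; split.
- by rewrite cat_rcons.
- by move: Hn; rewrite has_predC negbK.
- exact: Hx.
Qed.

Lemma split_last (a : pred T) s : has (predC a) s ->
  exists pre d suf, [/\ s = pre ++ d :: suf, ~~ a d & all a suf].
Proof.
rewrite -has_rev => /split_first [pre [c [post [Hs Ha Hc]]]].
exists (rev post), c, (rev pre); split => //; last by rewrite all_rev.
by rewrite -[s]revK Hs rev_cat rev_cons cat_rcons.
Qed.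

Lemma zip_mid l y z r x s : x :: s = l ++ y :: z :: r -> (y, z) \in zip (x :: s) s.
Proof.
elim: l x s => [|w l IH] x s /=.
  by case=> -> ->; rewrite /= in_cons eqxx.
case=> -> Hs; rewrite Hs; case: l IH Hs => [|w' l] IH Hs /=.
  by rewrite !in_cons eqxx orbT.
by rewrite in_cons (IH w' (l ++ [:: y, z & r])) ?orbT.
Qed.

Lemma path_zip (R : rel T) x s y z : path R x s -> (y, z) \in zip (x :: s) s -> R y z.
Proof.
elim: s x => [|w s IH] x //= /andP [Rxw Hp].
rewrite in_cons => /orP [/eqP [-> ->] //|]; exact: IH.
Qed.

Lemma internal_in x s z : uniq (x :: s) -> z \in s -> z != last x s ->
  z \in internal (x :: s).
Proof.
move=> Hu Hz Hl; rewrite /internal.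
case: s Hu Hz Hl => [|w s] //= Hu Hz Hl.
have : z \in rcons (belast w s) (last w s) by rewrite -lastI.
by rewrite mem_rcons in_cons (negbTE Hl).
Qed.

Lemma internal_out x s z : uniq (x :: s) -> z \in internal (x :: s) ->
  [/\ z \in s, z != x & z != last x s].
Proof.
rewrite /internal; case: s => [|w s] //.
rewrite cons_uniq => /andP [Hx Hu] Hz.
have Hb : z \in belast w s by move: Hz; rewrite /= => ->.
have Hzs : z \in w :: s by rewrite (lastI w s) mem_rcons in_cons Hb orbT.
split => //; first by apply/eqP => Ezx; rewrite -Ezx Hzs in Hx.
have Hl : last w s \notin belast w s.
  by move: Hu; rewrite (lastI w s) rcons_uniq => /andP [].
by apply/eqP => E; rewrite /= in E; rewrite -E Hb in Hl.
Qed.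

Lemma mem_zip' (s t : seq T) y z : (y, z) \in zip s t -> (y \in s) && (z \in t).
Proof.
elim: s t => [|a s IH] [|b t] //=; rewrite in_cons => /orP [/eqP [-> ->]|/IH /andP [H1 H2]].
  by rewrite !in_cons !eqxx.
by rewrite !in_cons H1 H2 !orbT.
Qed.

Lemma path_all_in (R : rel T) (p : pred T) x s :
  (forall a b, R a b -> p b) -> path R x s -> all p s.
Proof.
move=> HR; elim: s x => [|w s IH] x //= /andP [Hxw Hp].
by rewrite (HR _ _ Hxw) (IH w Hp).
Qed.

End Seqs.


Section Main.
Variables (T : finType) (G : rooted T) (A B : sgraph T) (delta : nat)
    (TH : finType) (H : rooted TH) (phi : TH -> T) (P : {set TH} -> seq T)
    (S : {set T}) (lam : T -> nat).
Hypotheses (wfG : wf_rgraph G) (sep : separation (rg G) A B) (wfH : wf_rgraph H)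
  (W : topminor_witness H G phi P)
  (HZ : groots G :|: closed_nbhd (realization H phi P) (phi @: gV (rg H)) \subset gV A)
  (HS : S \subset gV B :\: gV A).

Definition Q := gV A :&: gV B.
Definition adjG (u v : T) := [set u; v] \in gE (rg G).
Definition adjGS (u v : T) := [set u; v] \in gE (gdel (rg G) S).
Definition inPA e (z : T) := (z \in P e) && (z \in gV A).

Lemma inA_notS z : z \in gV A -> z \notin S.
Proof.
move=> Hz; apply/negP => /(subsetP HS); by rewrite !inE Hz.
Qed.

Lemma phiA w : w \in gV (rg H) -> phi w \in gV A.
Proof.
move=> Hw; apply: (subsetP HZ).
by rewrite in_setU /closed_nbhd in_setU (imset_f phi Hw) orbT.
Qed.

Lemma rootsA z : z \in groots G -> z \in gV A.
Proof. by move=> Hz; apply: (subsetP HZ); rewrite in_setU Hz. Qed.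

Lemma adjGS_of u v : adjG u v -> u \notin S -> v \notin S -> adjGS u v.
Proof.
rewrite /adjG => Huv Hu Hv; rewrite /adjGS /gdel /= inE Huv andTb.
rewrite disjoint_subset; apply/subsetP => z; rewrite !inE => /orP [/eqP ->|/eqP ->] //.
Qed.

Lemma adjB_GS u v : [set u; v] \in gE (gdel B S) -> adjGS u v.
Proof.
case: sep => _ _ _ HE _.
by rewrite /adjGS /gdel /= !inE HE in_setU => /andP [-> ->]; rewrite orbT.
Qed.

Lemma adjA_B u c : adjG u c -> u \in gV A -> c \notin gV A -> u \in Q.
Proof.
case: sep => wfA wfB _ HE _.
rewrite /adjG HE in_setU => /orP [He|He] Hu Hc.
  have [_ /subsetP Hs] := wfA _ He.
  by rewrite (Hs c) ?inE ?eqxx ?orbT in Hc.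
have [_ /subsetP Hs] := wfB _ He.
by rewrite /Q inE Hu (Hs u) // !inE eqxx.
Qed.

Lemma nbhd e x s y z : e \in gE (rg H) -> P e = x :: s ->
  (y, z) \in zip (x :: s) s -> y \in phi @: gV (rg H) -> z \in gV A.
Proof.
move=> He HP Hyz Hy; apply: (subsetP HZ).
rewrite in_setU /closed_nbhd in_setU; apply/orP; right; apply/orP; right.
rewrite inE; apply/andP; split.
  rewrite /realization /= in_setU; apply/orP; right.
  apply/bigcupP; exists e => //; rewrite inE HP.
  by move: (mem_zip' Hyz) => /andP [_ Hz]; rewrite in_cons Hz orbT.
apply/existsP; exists y; rewrite Hy andTb.
rewrite /realization /=; apply/bigcupP; exists e => //; rewrite HP /pedges.
by apply/imsetP; exists (y, z).
Qed.

Lemma nbhd' e x s y z : e \in gE (rg H) -> P e = x :: s ->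
  (y, z) \in zip (x :: s) s -> z \in phi @: gV (rg H) -> y \in gV A.
Proof.
move=> He HP Hyz Hz; apply: (subsetP HZ).
rewrite in_setU /closed_nbhd in_setU; apply/orP; right; apply/orP; right.
rewrite inE; apply/andP; split.
  rewrite /realization /= in_setU; apply/orP; right.
  apply/bigcupP; exists e => //; rewrite inE HP.
  by move: (mem_zip' Hyz) => /andP [Hy _].
apply/existsP; exists z; rewrite Hz andTb.
rewrite /realization /=; apply/bigcupP; exists e => //; rewrite HP /pedges setUC.
by apply/imsetP; exists (y, z).
Qed.


Lemma edge_info e : e \in gE (rg H) -> exists u v x s,
  [/\ e = [set u; v], u \in gV (rg H), v \in gV (rg H), phi u != phi v &
   [/\ P e = x :: s, x = phi u, last x s = phi v, uniq (x :: s) & path adjG x s]].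
Proof.
move=> He; case: W => [[Hinj Hin] Hpath _ _ _].
have [u [v [Huv Hp Hf Hl]]] := Hpath e He.
case: wfH => [wfHg _ _]; have [Hc Hsub] := wfHg e He.
have Hu : u \in gV (rg H) by apply: (subsetP Hsub); rewrite Huv !inE eqxx.
have Hv : v \in gV (rg H) by apply: (subsetP Hsub); rewrite Huv !inE eqxx orbT.
case E: (P e) Hp Hf Hl => [|x s] //= [_ Hu' Hp'] Hf Hl.
exists u, v, x, s; split => //.
apply/negP => /eqP /Hinj Euv; have Euv' := Euv Hu Hv.
by move: Hc; rewrite Huv Euv' setUid cards1.
Qed.


Definition rdata e a b :=
  [/\ a \in Q, b \in Q, a != b, a \in internal (P e) & b \in internal (P e)] /\
  exists x s w1 w2, [/\ P e = x :: s, path adjG x w1, last x w1 = a,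
     all (inPA e) (x :: w1) &
     [/\ path adjG b w2, last b w2 = last x s & all (inPA e) (b :: w2)]].

Lemma data_ex e : e \in gE (rg H) -> has (fun z => z \notin gV A) (P e) ->
  exists a b, rdata e a b.
Proof.
move=> He Hhas.
have [u [v [x [s [Huv Hu Hv Hne [HP Hx Hl Huq Hp]]]]]] := edge_info He.
have xA : x \in gV A by rewrite Hx phiA.
have vA : phi v \in gV A by apply: phiA.
have Hhs : has (predC (fun z => z \in gV A)) s.
  by move: Hhas; rewrite HP /= xA.
have [pre [c [post [Hs HpreA HcA]]]] := split_first Hhs.
rewrite /= in HcA.
have Hp' := Hp; rewrite Hs cat_path in Hp'; case/andP: Hp' => Hp1 Hp2.
have Hac : adjG (last x pre) c by case/andP: Hp2.
have HxpreA : all (fun z => z \in gV A) (x :: pre) by rewrite /= xA.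
have aA : last x pre \in gV A by apply: (allP HxpreA); apply: mem_last.
have aQ := adjA_B Hac aA HcA.
have Hhs2 : has (predC (fun z => z \in gV A)) (c :: post) by rewrite /= HcA.
have [mid [d [suf [Hcp HdA HsufA]]]] := split_last Hhs2.
rewrite /= in HdA.
case: suf Hcp HsufA => [|b l2] Hcp HsufA.
  exfalso; move: Hl; rewrite Hs Hcp !last_cat /= => Ed.
  by move: vA; rewrite -Ed (negbTE HdA).
have Hs' : x :: s = (x :: pre ++ mid) ++ [:: d, b & l2] by rewrite Hs Hcp catA.
have Hdb : adjG d b := path_zip Hp (zip_mid Hs').
have bA : b \in gV A by case/andP: HsufA.
have bQ : b \in Q by apply: (adjA_B (c := d)) => //; rewrite /adjG setUC.
have Hlast : last x s = last b l2 by rewrite Hs Hcp !last_cat.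
have Hdisj : forall z, z \in x :: pre -> z \in c :: post -> False.
  move=> z Hz1 Hz2; move: Huq; rewrite Hs -cat_cons cat_uniq => /and3P [_ Hh _].
  by move/negP: Hh; apply; apply/hasP; exists z.
have bcp : b \in c :: post by rewrite Hcp mem_cat !in_cons eqxx !orbT.
have lcp : last x s \in c :: post.
  by rewrite Hcp Hlast mem_cat; apply/orP; right; rewrite in_cons (mem_last b l2) orbT.
have Has : last x pre \in s.
  case Epre: pre => [|p0 pre'].
    exfalso; rewrite Epre /= in Hac Hs.
    have Hz : (x, c) \in zip (x :: s) s by apply: (zip_mid (l := [::])); rewrite Hs.
    have := nbhd He HP Hz; rewrite Hx (imset_f phi Hu) => /(_ isT) Hc.
    by rewrite Hc in HcA.
  by rewrite Hs Epre mem_cat (mem_last p0 pre').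
have Hbs : b \in s by rewrite Hs mem_cat bcp orbT.
have Huqs : uniq s by case/andP: Huq.
exists (last x pre), b; split; first split => //.
- by apply/negP => /eqP Eab; apply: (Hdisj (last x pre)); [apply: mem_last|rewrite Eab].
- rewrite HP; apply: internal_in => //.
  by apply/negP => /eqP E; apply: (Hdisj (last x pre)); [apply: mem_last|rewrite E].
- have Hbnl : b \notin l2.
    by move: Huqs; rewrite Hs Hcp catA cat_uniq => /and3P [_ _ /= /andP [_ /andP [Hb _]]].
  rewrite HP; apply: internal_in => //; rewrite Hlast.
  case: l2 Hbnl Hs' Hlast {Hcp HsufA lcp Hbs bcp} => [|y l2] Hbnl Hs' Hlast /=.
    have Hz : (d, b) \in zip (x :: s) s := zip_mid Hs'.
    move: Hl; rewrite Hlast /= => Hbv.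
    have := nbhd' He HP Hz; rewrite Hbv (imset_f phi Hv) => /(_ isT) Hd.
    by rewrite Hd in HdA.
  by apply/negP => /eqP E; rewrite E mem_last in Hbnl.
exists x, s, pre, l2; split => //.
- apply/allP => z Hz; rewrite /inPA HP (allP HxpreA z Hz) andbT.
  by move: Hz; rewrite Hs -cat_cons mem_cat => ->.
split => //.
- move: Hp; rewrite Hs Hcp catA cat_path => /andP [_ /= /andP [_ /andP [_ ->]]] //.
- apply/allP => z Hz; rewrite /inPA HP (allP HsufA z Hz) andbT.
  by rewrite in_cons Hs Hcp !mem_cat in_cons Hz !orbT.
Qed.


Definition rr e := (e \in gE (rg H)) && has (fun z => z \notin gV A) (P e).

Definition gspec e (o : option (T * T)) := match o with
  | None => ~~ rr e
  | Some (a, b) => e \in gE (rg H) /\ rdata e a b end.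

Lemma g_ex : exists g : {set TH} -> option (T * T), forall e, gspec e (g e).
Proof.
have Hex : forall e, exists o, gspec e o.
  move=> e; case Er: (rr e).
    case/andP: Er => He Hh; have [a [b Hab]] := data_ex He Hh.
    by exists (Some (a, b)).
  by exists None; rewrite /= Er.
exists (fun e => proj1_sig (constructive_indefinite_description _ (Hex e))).
by move=> e; case: (constructive_indefinite_description _ (Hex e)).
Qed.

Definition edge_of (o : option (T * T)) : {set T} :=
  match o with Some (a, b) => [set a; b] | None => set0 end.

Definition Hmin (g : {set TH} -> option (T * T)) : rooted T :=
  RGraph (Graph Q [set edge_of (g e) | e in [set e | g e != None]]) Q lam.


Variable g : {set TH} -> option (T * T).
Hypothesis Hg : forall e, gspec e (g e).
Hypothesis Hlam : {in Q &, injective lam}.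
Hypothesis Hdelta : #|gE (rg H)| + #|isolated (rg H)| <= delta.

Lemma gSome e a b : g e = Some (a, b) -> e \in gE (rg H) /\ rdata e a b.
Proof. by move=> E; have := Hg e; rewrite E. Qed.

Lemma wf_Hmin : wf_rgraph (Hmin g).
Proof.
split; [|by []|exact: Hlam].
move=> f /imsetP [e]; rewrite inE; case E: (g e) => [[a b]|] // _ ->.
have [_ [[aQ bQ ab _ _] _]] := gSome E.
rewrite cards2 ab; split => //; apply/subsetP => z; rewrite !inE.
by case/orP => /eqP ->; move: aQ bQ; rewrite /Q !inE.
Qed.

Lemma det_Hmin : detail_le (Hmin g) (4 * delta).
Proof.
split => /=; last by rewrite setDv cards0.
apply: (leq_trans (leq_imset_card _ _)).
apply: (@leq_trans #|gE (rg H)|).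
  apply: subset_leq_card; apply/subsetP => e; rewrite inE.
  by case E: (g e) => [[a b]|] // _; case: (gSome E).
apply: (leq_trans _ (leq_trans Hdelta _)); first exact: leq_addr.
by rewrite mulSn leq_addr.
Qed.


Variable psi : T -> {set T}.
Hypothesis Hpsi :
  [/\ (forall u, u \in gV (rg (Hmin g)) -> connected_in (gdel B S) (psi u)),
      (forall u v, u \in gV (rg (Hmin g)) -> v \in gV (rg (Hmin g)) -> u != v ->
           [disjoint psi u & psi v]),
      (forall u v, [set u; v] \in gE (rg (Hmin g)) -> u != v ->
           exists x y, [/\ x \in psi u, y \in psi v & [set x; y] \in gE (gdel B S)]) &
      (forall u, u \in groots (Hmin g) -> exists2 q, q \in Q & lam q = lab (Hmin g) u /\ q \in psi u)].

Lemma psi_self q : q \in Q -> q \in psi q.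
Proof.
move=> Hq; case: Hpsi => _ _ _ Hr; have [q' Hq' [El Hin]] := Hr q Hq.
by rewrite (Hlam Hq' Hq El) in Hin.
Qed.

Lemma psi_B q z : q \in Q -> z \in psi q -> z \in gV B.
Proof.
move=> Hq Hz; case: Hpsi => Hc _ _ _; have [_ [Hsub _]] := Hc q Hq.
by move/(subsetP Hsub): Hz; rewrite /gdel /= inE => /andP [_ ->].
Qed.

Lemma psiA q z : q \in Q -> z \in psi q -> z \in gV A -> z = q.
Proof.
move=> Hq Hz HzA; have zQ : z \in Q by rewrite /Q inE HzA (psi_B Hq Hz).
apply/eqP; apply/negP => /negP Hne; case: Hpsi => _ Hd _ _.
have := Hd z q zQ Hq Hne; rewrite disjoint_subset => /subsetP /(_ z (psi_self zQ)).
by rewrite inE Hz.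
Qed.

Lemma psi_disj q q' z : q \in Q -> q' \in Q -> z \in psi q -> z \in psi q' -> q = q'.
Proof.
move=> Hq Hq' Hz Hz'; apply/eqP; apply/negP => /negP Hne; case: Hpsi => _ Hd _ _.
have := Hd q q' Hq Hq' Hne; rewrite disjoint_subset => /subsetP /(_ z Hz).
by rewrite inE Hz'.
Qed.

Lemma bwalk e a b : g e = Some (a, b) -> exists w, [/\ path adjGS a w, last a w = b &
  all (fun z => (z \in psi a) || (z \in psi b)) (a :: w)].
Proof.
move=> E; have [He [[aQ bQ ab _ _] _]] := gSome E.
case: Hpsi => Hc _ He3 _.
have Hed : [set a; b] \in gE (rg (Hmin g)).
  by apply/imsetP; exists e; rewrite ?inE E.
have [x [y [Hx Hy Hxy]]] := He3 a b Hed ab.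
have [_ [_ Hca]] := Hc a aQ; have [_ [_ Hcb]] := Hc b bQ.
have [s1 [Hp1 Hl1]] := Hca a x (psi_self aQ) Hx.
have [s2 [Hp2 Hl2]] := Hcb y b Hy (psi_self bQ).
exists (s1 ++ y :: s2); split.
- rewrite cat_path Hl1 /= (adjB_GS Hxy) /=; apply/andP; split.
    by apply: sub_path Hp1 => u v /and3P [_ _ /adjB_GS].
  by apply: sub_path Hp2 => u v /and3P [_ _ /adjB_GS].
- by rewrite last_cat Hl1.
- rewrite /= (psi_self aQ) /= all_cat; apply/andP; split.
    apply: (path_all_in _ Hp1) => u v /and3P [_ -> _] //.
  rewrite /= Hy orbT /=.
  apply: (path_all_in _ Hp2) => u v /and3P [_ -> _]; by rewrite orbT.
Qed.


Definition Wp e z := inPA e z ||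
  (match g e with Some (a, b) => (z \in psi a) || (z \in psi b) | None => false end).

Lemma fwalk e : e \in gE (rg H) -> exists u v x s w,
  [/\ e = [set u; v], u \in gV (rg H), v \in gV (rg H), P e = x :: s & x = phi u] /\
  [/\ last x s = phi v, path adjGS x w, last x w = phi v & all (Wp e) (x :: w)].
Proof.
move=> He; have [u [v [x [s [Huv Hu Hv Hne [HP Hx Hl Huq Hp]]]]]] := edge_info He.
have Hsub : {in inPA e &, subrel adjG adjGS}.
  move=> a b /andP [_ Ha] /andP [_ Hb] Hab.
  by apply: adjGS_of => //; apply: inA_notS.
case E: (g e) => [[a b]|].
  have [_ [_ [x' [s' [w1 [w2 [HP' Hp1 Hl1 Ha1 [Hp2 Hl2 Ha2]]]]]]]] := gSome E.
  rewrite HP in HP'; case: HP' => Ex Es; subst x' s'.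
  have [w [Hpw Hlw Haw]] := bwalk E.
  exists u, v, x, s, (w1 ++ w ++ w2); split => //; split => //.
  - rewrite cat_path (sub_in_path Hsub Ha1 Hp1) Hl1 cat_path Hpw Hlw /=.
    apply: (sub_in_path Hsub Ha2 Hp2).
  - by rewrite !last_cat Hl1 Hlw Hl2.
  - rewrite -cat_cons !all_cat; apply/and3P; split.
    + by apply: sub_all Ha1 => z Hz; rewrite /Wp Hz.
    + by move: Haw => /andP [_]; apply: sub_all => z Hz; rewrite /Wp E Hz orbT.
    + move: Ha2 => /andP [_]; by apply: sub_all => z Hz; rewrite /Wp Hz.
have Hall : all (fun z => z \in gV A) (x :: s).
  have Hnr : ~~ rr e by have := Hg e; rewrite E.
  move: Hnr; rewrite /rr He andTb HP => Hn.
  apply/allP => z Hz; apply/negPn/negP => Hz'; move/negP: Hn; apply.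
  by apply/hasP; exists z.
have HallW : all (inPA e) (x :: s).
  by apply/allP => z Hz; rewrite /inPA HP Hz (allP Hall z Hz).
exists u, v, x, s, s; split => //; split => //.
- exact: (sub_in_path Hsub HallW Hp).
- by apply: sub_all HallW => z Hz; rewrite /Wp Hz.
Qed.


Definition Kin q z := if q \in Q then z \in psi q else z == q.

Lemma QA q : q \in Q -> q \in gV A.
Proof. by rewrite /Q inE => /andP []. Qed.

Lemma Kin_A q z : Kin q z -> z \in gV A -> z = q.
Proof.
rewrite /Kin; case: ifP => Hq Hz HzA; first exact: psiA Hz HzA.
exact/eqP.
Qed.

Lemma Kin_eq q q' z : q \in gV A -> q' \in gV A -> Kin q z -> Kin q' z -> q = q'.
Proof.
move=> HqA Hq'A; rewrite /Kin; case: ifP => Hq; case: ifP => Hq' Hz Hz'.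
- exact: psi_disj Hz Hz'.
- by move/eqP: Hz' => Ez; rewrite Ez in Hz; rewrite (psiA Hq Hz Hq'A).
- by move/eqP: Hz => Ez; rewrite Ez in Hz'; rewrite (psiA Hq' Hz' HqA).
- by move/eqP: Hz => <-; apply/eqP.
Qed.

Lemma key e x s z : e \in gE (rg H) -> P e = x :: s -> Wp e z -> z != x ->
  z != last x s -> exists q, [/\ q \in internal (P e), q \in gV A & Kin q z].
Proof.
move=> He HP Hw Hzx Hzl.
have [u [v [x' [s' [_ _ _ _ [HP' _ _ Huq _]]]]]] := edge_info He.
rewrite HP in HP'; case: HP' => Ex Es; subst x' s'.
case/orP: Hw => [/andP [Hz HzA]|].
  exists z; split => //.
    rewrite HP; apply: internal_in => //.
    by move: Hz; rewrite HP in_cons (negbTE Hzx).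
  by rewrite /Kin; case: ifP => Hq; [apply: psi_self|].
case E: (g e) => [[a b]|] // Hz.
have [_ [[aQ bQ _ Ha Hb] _]] := gSome E.
case/orP: Hz => Hz.
  by exists a; split => //; [apply: QA|rewrite /Kin aQ].
by exists b; split => //; [apply: QA|rewrite /Kin bQ].
Qed.

Lemma newpath e : e \in gE (rg H) -> exists u v x s p,
  [/\ e = [set u; v], u \in gV (rg H), v \in gV (rg H), P e = x :: s & x = phi u] /\
  [/\ last x s = phi v, path adjGS x p, last x p = phi v, uniq (x :: p) &
      all (Wp e) (x :: p)].
Proof.
move=> He; have [u [v [x [s [w [[Huv Hu Hv HP Hx] [Hl Hp Hlw Ha]]]]]]] := fwalk He.
case: (shortenP Hp) Hlw => p Hp' Huq Hsub Hlw.
exists u, v, x, s, p; split => //; split => //.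
move: Ha => /andP [Hax Haw]; rewrite /= Hax; apply/allP => z Hz.
exact: (allP Haw z (Hsub z Hz)).
Qed.


Lemma main_tm : topminor H (rdel G S).
Proof.
have Hex : forall e, exists p : seq T, e \in gE (rg H) -> exists u v x s p',
  ([/\ e = [set u; v], u \in gV (rg H), v \in gV (rg H), P e = x :: s & x = phi u] /\
   [/\ last x s = phi v, path adjGS x p', last x p' = phi v, uniq (x :: p') &
      all (Wp e) (x :: p')]) /\ p = x :: p'.
  move=> e; case He: (e \in gE (rg H)); last by exists [::].
  have [u [v [x [s [p Hs]]]]] := newpath He.
  by exists (x :: p) => _; exists u, v, x, s, p.
pose P' e := proj1_sig (constructive_indefinite_description _ (Hex e)).
have HP' : forall e, e \in gE (rg H) -> exists u v x s p',
  ([/\ e = [set u; v], u \in gV (rg H), v \in gV (rg H), P e = x :: s & x = phi u] /\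
   [/\ last x s = phi v, path adjGS x p', last x p' = phi v, uniq (x :: p') &
      all (Wp e) (x :: p')]) /\ P' e = x :: p'.
  by move=> e; rewrite /P'; case: (constructive_indefinite_description _ (Hex e)).
have Hin' : forall v, v \in gV (rg H) -> phi v \in gV (gdel (rg G) S).
  case: W => [[_ Hin] _ _ _ _] v Hv.
  by rewrite /gdel /= inE (Hin v Hv) andbT; apply: inA_notS; apply: phiA.
exists phi, P'.
case: W => [[Hinj Hin] Hpath Hdisj Hbr Hroot]; split.
- by split => // v Hv; apply: Hin'.
- move=> e He; have [u [v [x [s [p [[[Huv Hu Hv HP Hx] [Hl Hp Hlp Huq Ha]] Ep]]]]]] := HP' e He.
  exists u, v; rewrite Ep; split => //=.
  by split => //; rewrite Hx; apply: Hin'.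
- move=> e e' He He' Hne.
  have [u [v [x [s [p [[[Huv Hu Hv HP Hx] [Hl Hp Hlp Huq Ha]] Ep]]]]]] := HP' e He.
  have [u' [v' [x' [s' [p' [[[Huv' Hu' Hv' HP2 Hx'] [Hl' Hp2 Hlp' Huq' Ha']] Ep']]]]]] := HP' e' He'.
  rewrite Ep Ep' disjoint_subset; apply/subsetP => z; rewrite !inE => Hz.
  apply/negP => Hz'.
  have [Hz1 Hz2 Hz3] := internal_out Huq Hz.
  have [Hz1' Hz2' Hz3'] := internal_out Huq' Hz'.
  have Wz : Wp e z by apply: (allP Ha); rewrite in_cons Hz1 orbT.
  have Wz' : Wp e' z by apply: (allP Ha'); rewrite in_cons Hz1' orbT.
  have Hzl : z != last x s by rewrite Hl -Hlp.
  have Hzl' : z != last x' s' by rewrite Hl' -Hlp'.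
  have [q [Hq HqA Kq]] := key He HP Wz Hz2 Hzl.
  have [q' [Hq' Hq'A Kq']] := key He' HP2 Wz' Hz2' Hzl'.
  have Eq := Kin_eq HqA Hq'A Kq Kq'; subst q'.
  have := Hdisj e e' He He' Hne; rewrite disjoint_subset => /subsetP /(_ q).
  by rewrite !inE Hq Hq' => /(_ isT).
- move=> e w He Hw; apply/negP => Hz.
  have [u [v [x [s [p [[[Huv Hu Hv HP Hx] [Hl Hp Hlp Huq Ha]] Ep]]]]]] := HP' e He.
  rewrite Ep in Hz; have [Hz1 Hz2 Hz3] := internal_out Huq Hz.
  have Wz : Wp e (phi w) by apply: (allP Ha); rewrite in_cons Hz1 orbT.
  have Hzl : phi w != last x s by rewrite Hl -Hlp.
  have [q [Hq HqA Kq]] := key He HP Wz Hz2 Hzl.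
  have Eq := Kin_A Kq (phiA Hw); subst q.
  by move/negP: (Hbr e w He Hw).
- move=> v Hv; have [Hr Hl] := Hroot v Hv; split => //.
  by rewrite /rdel /= inE Hr andbT; apply: inA_notS; apply: rootsA.
Qed.

End Main.

Theorem lemma4p8 (T : finType) (G : rooted T) (A B : sgraph T) (delta : nat)
    (TH : finType) (H : rooted TH) (phi : TH -> T) (P : {set TH} -> seq T)
    (S : {set T}) (lam : T -> nat) :
  wf_rgraph G -> separation (rg G) A B -> wf_rgraph H ->
  #|gE (rg H)| + #|isolated (rg H)| <= delta ->
  topminor_witness H G phi P ->
  groots G :|: closed_nbhd (realization H phi P) (phi @: gV (rg H)) \subset gV A ->
  S \subset gV B :\: gV A ->
  {in gV A :&: gV B &, injective lam} ->
  generic_minor_folio (4 * delta) (gdel B S) (gV A :&: gV B) lam ->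
  in_folio delta H (rdel G S).
Proof.
move=> wfG sep wfH Hdelta W HZ HS Hlam Hgen.
split => //.
have [g Hg] := g_ex sep wfH W HZ.
have Hwf := wf_Hmin Hg Hlam.
have Hdet := det_Hmin lam Hg Hdelta.
have [psi Hpsi] := Hgen _ _ Hwf (fun _ => erefl) Hdet.
exact: (main_tm sep wfH W HZ HS Hg Hlam Hpsi).
Qed.
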